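(* Let $u_0\in\ell^\infty_+(\mathbb{Z})$ with $\frac12\le u_0\le1$. Then for every $\varepsilon>0$ there exist a creation operator $\Psi_*$ and $N_0\in\mathbb{N}$ such that $$\Big|\Lambda(\Psi_*u_0,k,N)-\tfrac12\Big|\le\varepsilon\quad\text{for all }k\in\mathbb{Z},\ N\ge N_0.$$ Furthermore, the jump sequence $d$ of $\Psi_*$ satisfies $\|d\|_\infty<\infty$, with a bound depending only on $\varepsilon$.
   Context: $\ell^\infty_+(\mathbb{Z})$: bounded nonnegative sequences. Local averages: $\Lambda(x,k,N)=\frac1{2N+1}\sum_{l=-N}^N x(k-l)$. A creation operator is given by a strictly increasing $\Psi:\mathbb{Z}\to\mathbb{Z}$; its jump sequence records the gaps $d=\Psi(k+1)-\Psi(k)-1\in\mathbb{N}_0$ (number of inserted particles between consecutive original particles), and $\Psi_*x(\Psi(k))=x(k)$, $\Psi_*x(l)=0$ for $l\notin\Psi(\mathbb{Z})$. *)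

(* Defs.v *)
From Stdlib Require Import Reals Lra Lia ZArith ClassicalEpsilon.
Open Scope R_scope.

Definition linf_plus (x : Z -> R) : Prop :=
  (forall k, 0 <= x k) /\ exists M, forall k, x k <= M.

Definition Lambda (x : Z -> R) (k : Z) (N : nat) : R :=
  / INR (2 * N + 1) *
  sum_f_R0 (fun i => x (k - (Z.of_nat i - Z.of_nat N))%Z) (2 * N).

Definition strictly_increasing (Psi : Z -> Z) : Prop :=
  forall k l, (k < l)%Z -> (Psi k < Psi l)%Z.

(* creation operator Psi_* : (Psi_* x)(Psi k) = x k, and 0 off the range of Psi *)
Definition push (Psi : Z -> Z) (x : Z -> R) (l : Z) : R :=
  match excluded_middle_informative (exists k, Psi k = l) with
  | left H => x (proj1_sig (constructive_indefinite_description _ H))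
  | right _ => 0
  end.

Definition jump (Psi : Z -> Z) (k : Z) : Z := (Psi (k + 1) - Psi k - 1)%Z.

(* Main.v *)
Require Import Defs.
From Stdlib Require Import Reals ZArith Lra Lia ClassicalEpsilon.
Open Scope R_scope.

Fixpoint Sp (u : Z -> R) (n : nat) : R :=
  match n with O => 0 | S m => Sp u m + u (Z.of_nat (S m)) end.
Fixpoint Sn (u : Z -> R) (n : nat) : R :=
  match n with O => 0 | S m => Sn u m + u (- Z.of_nat m)%Z end.
Definition SS (u : Z -> R) (k : Z) : R :=
  if (0 <=? k)%Z then Sp u (Z.to_nat k) else - Sn u (Z.to_nat (- k)).

Lemma SS_pos u n : SS u (Z.of_nat n) = Sp u n.
Proof.
  unfold SS. destruct (0 <=? Z.of_nat n)%Z eqn:E.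
  - rewrite Nat2Z.id; auto.
  - apply Z.leb_gt in E; lia.
Qed.

Lemma SS_neg u n : SS u (- Z.of_nat (S n))%Z = - Sn u (S n).
Proof.
  unfold SS. destruct (0 <=? - Z.of_nat (S n))%Z eqn:E.
  - apply Z.leb_le in E; lia.
  - rewrite Z.opp_involutive, Nat2Z.id; auto.
Qed.

Lemma SS_step u k : SS u (k + 1) = SS u k + u (k + 1)%Z.
Proof.
  destruct (Z_le_gt_dec 0 k) as [Hk|Hk].
  - replace k with (Z.of_nat (Z.to_nat k)) by lia.
    set (n := Z.to_nat k).
    replace (Z.of_nat n + 1)%Z with (Z.of_nat (S n)) by lia.
    rewrite !SS_pos. simpl. reflexivity.
  - destruct (Z.to_nat (- k - 1)) as [|m] eqn:E.
    + replace k with (- Z.of_nat 1)%Z by lia.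
      replace (- Z.of_nat 1 + 1)%Z with (Z.of_nat 0) by lia.
      rewrite SS_pos, SS_neg. simpl. ring.
    + replace k with (- Z.of_nat (S (S m)))%Z by lia.
      replace (- Z.of_nat (S (S m)) + 1)%Z with (- Z.of_nat (S m))%Z by lia.
      rewrite !SS_neg. change (Sn u (S (S m))) with (Sn u (S m) + u (- Z.of_nat (S m))%Z).
      ring.
Qed.

Definition PsiF (u : Z -> R) (k : Z) : Z := up (2 * SS u k).

Lemma Psi_bounds u k : 2 * SS u k < IZR (PsiF u k) <= 2 * SS u k + 1.
Proof.
  unfold PsiF. destruct (archimed (2 * SS u k)). lra.
Qed.

Section Main.
End Main.

Lemma Psi_step u (Hu : forall k, / 2 <= u k <= 1) k :
  (PsiF u k + 1 <= PsiF u (k + 1) <= PsiF u k + 2)%Z.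
Proof.
  pose proof (Psi_bounds u k). pose proof (Psi_bounds u (k+1)).
  rewrite SS_step in H0. pose proof (Hu (k+1)%Z).
  assert (A : 0 < IZR (PsiF u (k+1) - PsiF u k)) by (rewrite minus_IZR; lra).
  assert (B : IZR (PsiF u (k+1) - PsiF u k) < 3) by (rewrite minus_IZR; lra).
  apply lt_IZR in A. apply lt_IZR in B. lia.
Qed.

Lemma Psi_mono_S u (Hu : forall k, / 2 <= u k <= 1) k n :
  (PsiF u k < PsiF u (k + Z.of_nat (S n)))%Z.
Proof.
  induction n.
  - pose proof (Psi_step u Hu k). simpl Z.of_nat. lia.
  - pose proof (Psi_step u Hu (k + Z.of_nat (S n))).
    replace (k + Z.of_nat (S (S n)))%Z with (k + Z.of_nat (S n) + 1)%Z by lia. lia.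
Qed.

Lemma Psi_strict u (Hu : forall k, / 2 <= u k <= 1) k l :
  (k < l)%Z -> (PsiF u k < PsiF u l)%Z.
Proof.
  intros H. replace l with (k + Z.of_nat (S (Z.to_nat (l - k - 1))))%Z by lia.
  apply Psi_mono_S; auto.
Qed.

Lemma Psi_le u (Hu : forall k, / 2 <= u k <= 1) k l :
  (k <= l)%Z -> (PsiF u k <= PsiF u l)%Z.
Proof.
  intros H. destruct (Z.eq_dec k l). subst; lia.
  pose proof (Psi_strict u Hu k l). lia.
Qed.

Definition bracket u k l := (PsiF u k <= l < PsiF u (k + 1))%Z.

Lemma bracket_uniq u (Hu : forall k, / 2 <= u k <= 1) k j l :
  bracket u k l -> bracket u j l -> k = j.
Proof.
  unfold bracket; intros H1 H2.
  destruct (Z.lt_trichotomy k j) as [h|[h|h]]; auto.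
  - pose proof (Psi_le u Hu (k+1) j). lia.
  - pose proof (Psi_le u Hu (j+1) k). lia.
Qed.

Lemma bracket_ex u (Hu : forall k, / 2 <= u k <= 1) l : exists k, bracket u k l.
Proof.
  unfold bracket.
  assert (Up : forall n, exists k, (PsiF u k <= PsiF u 0 + Z.of_nat n < PsiF u (k + 1))%Z).
  { induction n.
    - exists 0%Z. pose proof (Psi_step u Hu 0). lia.
    - destruct IHn as [k Hk].
      destruct (Z.eq_dec (PsiF u 0 + Z.of_nat (S n)) (PsiF u (k+1))).
      + exists (k+1)%Z. pose proof (Psi_step u Hu (k+1)). lia.
      + exists k. lia. }
  assert (Dn : forall n, exists k, (PsiF u k <= PsiF u 0 - Z.of_nat n < PsiF u (k + 1))%Z).
  { induction n.
    - exists 0%Z. pose proof (Psi_step u Hu 0). lia.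
    - destruct IHn as [k Hk].
      destruct (Z.eq_dec (PsiF u 0 - Z.of_nat n) (PsiF u k)).
      + exists (k-1)%Z. pose proof (Psi_step u Hu (k-1)).
        replace (k - 1 + 1)%Z with k in * by lia. lia.
      + exists k. lia. }
  destruct (Z_le_gt_dec (PsiF u 0) l).
  - destruct (Up (Z.to_nat (l - PsiF u 0))) as [k Hk]. exists k.
    replace (PsiF u 0 + Z.of_nat (Z.to_nat (l - PsiF u 0)))%Z with l in Hk by lia. auto.
  - destruct (Dn (Z.to_nat (PsiF u 0 - l))) as [k Hk]. exists k.
    replace (PsiF u 0 - Z.of_nat (Z.to_nat (PsiF u 0 - l)))%Z with l in Hk by lia. auto.
Qed.

Lemma push_step u (Hu : forall k, / 2 <= u k <= 1) c ka kb :
  bracket u ka c -> bracket u kb (c - 1) -> push (PsiF u) u c = SS u ka - SS u kb.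
Proof.
  intros Ha Hb. unfold push.
  destruct (excluded_middle_informative _) as [H|H].
  - destruct (constructive_indefinite_description _ H) as [j Hj]. simpl.
    pose proof (Psi_step u Hu j). pose proof (Psi_step u Hu (j-1)).
    replace (j - 1 + 1)%Z with j in * by lia.
    assert (ka = j) by (apply (bracket_uniq u Hu ka j c); auto; unfold bracket; lia).
    assert (kb = (j-1)%Z) by (apply (bracket_uniq u Hu kb (j-1) (c-1)); auto; unfold bracket;
      replace (j - 1 + 1)%Z with j by lia; lia).
    subst. pose proof (SS_step u (j-1)). replace (j - 1 + 1)%Z with j in * by lia. lra.
  - assert (ka = kb).
    { apply (bracket_uniq u Hu ka kb c); auto. unfold bracket in *.
      destruct (Z.eq_dec c (PsiF u (kb+1))).
      + exfalso. apply H. exists (kb+1)%Z. auto.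
      + lia. }
    subst. ring.
Qed.

Lemma tele u (Hu : forall k, / 2 <= u k <= 1) n : forall c ka kb,
  bracket u ka c -> bracket u kb (c - Z.of_nat n - 1) ->
  sum_f_R0 (fun i => push (PsiF u) u (c - Z.of_nat i)%Z) n = SS u ka - SS u kb.
Proof.
  induction n; intros c ka kb Ha Hb.
  - simpl. replace (c - 0)%Z with c by lia.
    apply push_step; auto. replace (c - 1)%Z with (c - Z.of_nat 0 - 1)%Z by lia. auto.
  - change (sum_f_R0 ?f (S n)) with (sum_f_R0 f n + f (S n)); cbv beta.
    destruct (bracket_ex u Hu (c - Z.of_nat n - 1)) as [km Hm].
    rewrite (IHn c ka km Ha Hm).
    rewrite (push_step u Hu (c - Z.of_nat (S n)) km kb).
    + ring.
    + replace (c - Z.of_nat (S n))%Z with (c - Z.of_nat n - 1)%Z by lia. auto.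
    + replace (c - Z.of_nat (S n) - 1)%Z with (c - Z.of_nat (S n) - 1)%Z by lia. auto.
Qed.

Lemma bracket_bound u (Hu : forall k, / 2 <= u k <= 1) k l :
  bracket u k l -> IZR l - 3 < 2 * SS u k < IZR l.
Proof.
  unfold bracket; intros [H1 H2].
  apply IZR_le in H1. apply IZR_lt in H2.
  pose proof (Psi_bounds u k). pose proof (Psi_bounds u (k+1)).
  rewrite SS_step in H0. pose proof (Hu (k+1)%Z). lra.
Qed.

Theorem lemma4p2 :
  forall eps : R, 0 < eps ->
  exists D : Z,
  forall u0 : Z -> R,
    linf_plus u0 ->
    (forall k, / 2 <= u0 k <= 1) ->
    exists (Psi : Z -> Z) (N0 : nat),
      strictly_increasing Psi /\
      (forall k, (0 <= jump Psi k <= D)%Z) /\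
      (forall (k : Z) (N : nat), (N0 <= N)%nat ->
         Rabs (Lambda (push Psi u0) k N - / 2) <= eps).
Proof.
  intros eps Heps. exists 1%Z. intros u0 _ Hu.
  exists (PsiF u0), (Z.to_nat (up (/ eps))). split; [|split].
  - intros k l. apply Psi_strict; auto.
  - intros k. unfold jump. pose proof (Psi_step u0 Hu k). lia.
  - intros k N HN.
    assert (HN0 : / eps < INR N).
    { destruct (archimed (/ eps)) as [a1 _].
      assert (0 < IZR (up (/ eps))) by (pose proof (Rinv_0_lt_compat _ Heps); lra).
      apply lt_IZR in H.
      apply le_INR in HN. rewrite INR_IZR_INZ, Z2Nat.id in HN by lia. lra. }
    unfold Lambda.
    set (c := (k + Z.of_nat N)%Z).
    rewrite (sum_eq _ (fun i => push (PsiF u0) u0 (c - Z.of_nat i)%Z)).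
    2:{ intros i _. f_equal. unfold c. lia. }
    destruct (bracket_ex u0 Hu c) as [ka Ha].
    destruct (bracket_ex u0 Hu (c - Z.of_nat (2 * N) - 1)) as [kb Hb].
    rewrite (tele u0 Hu (2 * N) c ka kb Ha Hb).
    pose proof (bracket_bound u0 Hu _ _ Ha) as Ba.
    pose proof (bracket_bound u0 Hu _ _ Hb) as Bb.
    assert (E : IZR c - IZR (c - Z.of_nat (2 * N) - 1) = INR (2 * N + 1)).
    { rewrite <- minus_IZR.
      replace (c - (c - Z.of_nat (2 * N) - 1))%Z with (Z.of_nat (2 * N + 1)) by lia.
      rewrite <- INR_IZR_INZ. reflexivity. }
    assert (EM : INR (2 * N + 1) = 2 * INR N + 1).
    { rewrite plus_INR, mult_INR. simpl. ring. }
    set (M := INR (2 * N + 1)) in *.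
    set (s := SS u0 ka - SS u0 kb).
    assert (Hs : Rabs (s - M / 2) < 3 / 2).
    { apply Rabs_def1; unfold s; lra. }
    assert (HM : 0 < M) by (pose proof (pos_INR N); lra).
    assert (Heq : / M * s - / 2 = (s - M / 2) * / M) by (field; lra).
    rewrite Heq, Rabs_mult, (Rabs_right (/ M)) by (left; apply Rinv_0_lt_compat; lra).
    assert (HeM : 3 / 2 <= eps * M).
    { assert (eps * INR N > 1).
      { apply (Rmult_lt_compat_l eps) in HN0; auto. rewrite Rinv_r in HN0; lra. }
      rewrite EM. rewrite Rmult_plus_distr_l, Rmult_1_r. lra. }
    apply (Rmult_le_reg_r M); auto.
    rewrite Rmult_assoc, Rinv_l by lra. lra.
Qed.
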